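(* Let $\mathcal{D}$ be a probability distribution over triples $(x,y,z)$, and let $S=\{(x_1,y_1,z_1),\dots,(x_N,y_N,z_N)\}$ be a finite sample. For parameters $u\in\mathcal{U}$, $v\in\mathcal{V}$, $w\in\mathcal{W}$ and $\rho>0$, define the joint loss $$l_J(x,y,z;u,v,w) = -l_p(h_p(g(x;u);v),y) + \rho\, l_u(h_u(g(x;u);w),z).$$ Let $(u^\ast,v^\ast,w^\ast)$ be a solution of the expected-risk problem, i.e. $v^\ast=v^\ast(u^\ast)$, $w^\ast=w^\ast(u^\ast)$ and $u^\ast$ minimizes $u\mapsto E_{\mathcal{D}}[l_J(u,v^\ast(u),w^\ast(u))]$, where $v^\ast(u)\in\arg\max_v E_{\mathcal{D}}[-l_p(u,v)]$ and $w^\ast(u)\in\arg\min_w E_{\mathcal{D}}[l_u(u,w)]$; equivalently $$E_{\mathcal{D}}[l_J(u^\ast,v^\ast,w^\ast)] = \min_u\Big[\max_v E_{\mathcal{D}}[-l_p(u,v)] + \rho\min_w E_{\mathcal{D}}[l_u(u,w)]\Big].$$ Let $(\hat u,\hat v,\hat w)$ be the analogous solution of the empirical problem, with $E_{\mathcal{D}}$ replaced by the empirical mean $E_S$ (so $\hat v=\hat v(\hat u)$, $\hat w=\hat w(\hat u)$ with $\hat v(u)\in\arg\max_v E_S[-l_p(u,v)]$, $\hat w(u)\in\arg\min_w E_S[l_u(u,w)]$, and $\hat u$ minimizes $u\mapsto E_S[l_J(u,\hat v(u),\hat w(u))]$). Then $$\big| E_{\mathcal{D}}[l_J(\hat u,\hat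 v,\hat w)] - E_{\mathcal{D}}[l_J(u^\ast,v^\ast,w^\ast)]\big| \le 2\sup_{u,v,w}\big| E_{\mathcal{D}}[l_J(u,v,w)] - E_S[l_J(u,v,w)]\big|.$$
   Context: Setting: $\mathcal{X}\subset\mathbb{R}^D$ is a feature space; $y$ is a private variable and $z$ a target variable. A filter $g(\cdot;u):\mathcal{X}\to\mathbb{R}^d$ is parameterized by $u\in\mathcal{U}$; predictors $h_p(\cdot;v)$ ($v\in\mathcal{V}$) and $h_u(\cdot;w)$ ($w\in\mathcal{W}$) act on filter outputs; $l_p,l_u$ are real-valued loss functions. The sets $\mathcal{U},\mathcal{V},\mathcal{W}$ are compact convex subsets of Euclidean spaces, and $g,h_p,h_u,l_p,l_u$ are continuous, so that all minima/maxima are attained. Notation: $l_p(u,v)$ stands for the random quantity $l_p(h_p(g(x;u);v),y)$, $l_u(u,w)$ for $l_u(h_u(g(x;u);w),z)$, and $l_J(u,v,w)$ for $l_J(x,y,z;u,v,w)$. $E_{\mathcal{D}}[\cdot]$ denotes expectation with $(x,y,z)\sim\mathcal{D}$, and $E_S[f]=\frac1N\sum_{(x,y,z)\in S} f(x,y,z)$ the empirical mean over $S$. *)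

(* Defs.v *)
From HB Require Import structures.
From mathcomp Require Import all_boot all_order all_algebra.
From mathcomp Require Import all_classical all_reals all_analysis.
Set Implicit Arguments. Unset Strict Implicit. Unset Printing Implicit Defensive.
Import Order.TTheory GRing.Theory Num.Theory.
Local Open Scope classical_set_scope.
Local Open Scope ring_scope.

(* Expectation E_D[f] of a real function under a probability P (real-valued;
   used only for integrable f, see the hypotheses of theorem1). *)
Definition ED (R : realType) (d : measure_display) (T : measurableType d)
  (P : probability T R) (f : T -> R) : R := Rintegral P setT f.

Definition ES (R : realType) (T : Type) (S : seq T) (f : T -> R) : R :=
  (size S)%:R^-1 * \sum_(s <- S) f s.

Definition lJ (R : realType) (X Y Z F U V W Yp Zp : Type)
  (g : X -> U -> F) (hp : F -> V -> Yp) (hu : F -> W -> Zp)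
  (lp : Yp -> Y -> R) (lu : Zp -> Z -> R) (rho : R)
  (u : U) (v : V) (w : W) (t : X * Y * Z) : R :=
  - lp (hp (g t.1.1 u) v) t.1.2 + rho * lu (hu (g t.1.1 u) w) t.2.

(* Main.v *)
Require Import Defs.
From HB Require Import structures.
From mathcomp Require Import all_boot all_order all_algebra.
From mathcomp Require Import all_classical all_reals all_analysis.
From mathcomp Require Import lra.
Import Order.TTheory GRing.Theory Num.Theory.
Local Open Scope classical_set_scope.
Local Open Scope ring_scope.

Theorem theorem1 (R : realType)
  (dX dY dZ : measure_display)
  (X : measurableType dX) (Y : measurableType dY) (Z : measurableType dZ)
  (dd pu pv pw : nat) (Yp Zp : Type)
  (U : set 'rV[R]_pu) (V : set 'rV[R]_pv) (W : set 'rV[R]_pw)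
  (g : X -> 'rV[R]_pu -> 'rV[R]_dd)
  (hp : 'rV[R]_dd -> 'rV[R]_pv -> Yp) (hu : 'rV[R]_dd -> 'rV[R]_pw -> Zp)
  (lp : Yp -> Y -> R) (lu : Zp -> Z -> R) (rho : R)
  (P : probability (X * Y * Z)%type R) (S : seq (X * Y * Z)%type)
  (vstar : 'rV[R]_pu -> 'rV[R]_pv) (wstar : 'rV[R]_pu -> 'rV[R]_pw)
  (ustar : 'rV[R]_pu)
  (vhat : 'rV[R]_pu -> 'rV[R]_pv) (what : 'rV[R]_pu -> 'rV[R]_pw)
  (uhat : 'rV[R]_pu) :
  0 < rho ->
  (* the expectations E_D[l_p(u,v)] and E_D[l_u(u,w)] are finite *)
  (forall u v, U u -> V v ->
     P.-integrable setT (fun t => (lp (hp (g t.1.1 u) v) t.1.2)%:E)) ->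
  (forall u w, U u -> W w ->
     P.-integrable setT (fun t => (lu (hu (g t.1.1 u) w) t.2)%:E)) ->
  (* expected-risk solution: ustar, vstar ustar, wstar ustar *)
  (forall u, U u -> V (vstar u) /\
     forall v, V v -> ED P (fun t => - lp (hp (g t.1.1 u) v) t.1.2)
                      <= ED P (fun t => - lp (hp (g t.1.1 u) (vstar u)) t.1.2)) ->
  (forall u, U u -> W (wstar u) /\
     forall w, W w -> ED P (fun t => lu (hu (g t.1.1 u) (wstar u)) t.2)
                      <= ED P (fun t => lu (hu (g t.1.1 u) w) t.2)) ->
  U ustar ->
  (forall u, U u -> ED P (lJ g hp hu lp lu rho ustar (vstar ustar) (wstar ustar))
                    <= ED P (lJ g hp hu lp lu rho u (vstar u) (wstar u))) ->
  (* empirical solution: uhat, vhat uhat, what uhat *)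
  (forall u, U u -> V (vhat u) /\
     forall v, V v -> ES S (fun t => - lp (hp (g t.1.1 u) v) t.1.2)
                      <= ES S (fun t => - lp (hp (g t.1.1 u) (vhat u)) t.1.2)) ->
  (forall u, U u -> W (what u) /\
     forall w, W w -> ES S (fun t => lu (hu (g t.1.1 u) (what u)) t.2)
                      <= ES S (fun t => lu (hu (g t.1.1 u) w) t.2)) ->
  U uhat ->
  (forall u, U u -> ES S (lJ g hp hu lp lu rho uhat (vhat uhat) (what uhat))
                    <= ES S (lJ g hp hu lp lu rho u (vhat u) (what u))) ->
  ((`| ED P (lJ g hp hu lp lu rho uhat (vhat uhat) (what uhat))
       - ED P (lJ g hp hu lp lu rho ustar (vstar ustar) (wstar ustar)) |)%:E
   <= 2%:E * ereal_sup
        [set e | exists u v w, [/\ U u, V v, W w &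
           e = (`| ED P (lJ g hp hu lp lu rho u v w)
                   - ES S (lJ g hp hu lp lu rho u v w) |)%:E]])%E.
Proof.
Proof.
move=> rho0 Ilp Ilu Hvs Hws Us Hus Hvh Hwh Uh Huh.
pose A u v := ED P (fun t => - lp (hp (g t.1.1 u) v) t.1.2).
pose B u w := ED P (fun t => lu (hu (g t.1.1 u) w) t.2).
pose A' u v := ES S (fun t => - lp (hp (g t.1.1 u) v) t.1.2).
pose B' u w := ES S (fun t => lu (hu (g t.1.1 u) w) t.2).
have EDN : forall u v, U u -> V v ->
    A u v = - ED P (fun t => lp (hp (g t.1.1 u) v) t.1.2).
  move=> u v Uu Vv; rewrite /A /ED.
  under eq_Rintegral do rewrite -mulN1r.
  rewrite RintegralZl //.
  lra.
  exact: Ilp.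
have EDlJ : forall u v w, U u -> V v -> W w ->
    ED P (lJ g hp hu lp lu rho u v w) = A u v + rho * B u w.
  move=> u v w Uu Vv Ww; rewrite EDN // /B /ED.
  have -> : lJ g hp hu lp lu rho u v w = (fun t => rho * lu (hu (g t.1.1 u) w) t.2 - lp (hp (g t.1.1 u) v) t.1.2).
    by apply/funext => t; rewrite /lJ addrC.
  rewrite RintegralB //; last exact: Ilp.
    by rewrite RintegralZl //; [rewrite addrC | exact: Ilu].
  have h := integrableZl measurableT rho (Ilu u w Uu Ww).
  apply: (eq_integrable measurableT _ _ _ h) => x _ /=.
  by rewrite EFinM.

have ESlJ : forall u v w,
    ES S (lJ g hp hu lp lu rho u v w) = A' u v + rho * B' u w.
  move=> u v w; rewrite /A' /B' /ES /lJ big_split /= mulrDr.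
  congr (_ + _); rewrite -big_distrr /= mulrCA //.
set e := ereal_sup _.
have He : forall u v w, U u -> V v -> W w ->
    ((`| ED P (lJ g hp hu lp lu rho u v w)
                   - ES S (lJ g hp hu lp lu rho u v w) |)%:E <= e)%E.
  by move=> u v w Uu Vv Ww; apply: ereal_sup_ubound; exists u, v, w.
case Ee : e He => [r| |] He.
- have Hr : forall u v w, U u -> V v -> W w ->
      - r <= A u v + rho * B u w - (A' u v + rho * B' u w) <= r.
    move=> u v w Uu Vv Ww; rewrite -ler_norml -EDlJ // -ESlJ -lee_fin.
    exact: He.
  have [Vs Hvs'] := Hvs _ Us; have [Ws Hws'] := Hws _ Us.
  have [Vh Hvh'] := Hvh _ Uh; have [Wh Hwh'] := Hwh _ Uh.
  rewrite -EFinM lee_fin !EDlJ //.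
  have [Vsh Hvsh] := Hvs _ Uh; have [Wsh Hwsh] := Hws _ Uh.
  have [Vhs Hvhs] := Hvh _ Us; have [Whs Hwhs] := Hwh _ Us.
  have rho0' := ltW rho0.
  have /andP[h1 h1'] := Hr _ _ _ Uh Vh Wh.
  have h2 := Huh _ Us; rewrite !ESlJ in h2.
  have h3 : rho * B' ustar (what ustar) <= rho * B' ustar (wstar ustar).
    by rewrite ler_wpM2l //; exact: Hwhs.
  have /andP[h4 h4'] := Hr _ _ _ Us Vhs Ws.
  have h5 : A ustar (vhat ustar) <= A ustar (vstar ustar) by exact: Hvs'.
  have h6 := Hus _ Uh; rewrite !EDlJ // in h6.
  have h7 : rho * B uhat (wstar uhat) <= rho * B uhat (what uhat).
    by rewrite ler_wpM2l //; exact: Hwsh.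
  have /andP[h8 h8'] := Hr _ _ _ Uh Vsh Wh.
  have h9 : A' uhat (vstar uhat) <= A' uhat (vhat uhat) by exact: Hvh'.
  rewrite ler_norml; apply/andP; split; lra.
- by rewrite mulry gtr0_sg // mul1e leey.
- have [Vs _] := Hvs _ Us; have [Ws _] := Hws _ Us.
  by have := He _ _ _ Us Vs Ws; rewrite leeNy_eq.
Qed.
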